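(* Let $R$ be an associative ring with identity and $M$ a left $R$-module that is projective in $\sigma[M]$. Then: (1) $\Lambda(M)$, with the product $N_ML$, is a quasi-quantale; in fact $(\sum_{i\in I}N_i)_ML=\sum_{i\in I}(N_{i\,M}L)$ for every family $\{N_i\}_{i\in I}\subseteq\Lambda(M)$ and every $L\in\Lambda(M)$. (2) $\Lambda^{fi}(M)$ is a right-unital subquasi-quantale of $\Lambda(M)$: it is closed under arbitrary sums and under the product, and $N_MM=N$ for all $N\in\Lambda^{fi}(M)$.
   Context: $\Lambda(M)$ is the complete lattice of submodules of $M$ (join = sum, meet = intersection), and $\Lambda^{fi}(M)$ is the set of fully invariant submodules $N$ (i.e. $f(N)\subseteq N$ for all $f\in\mathrm{End}_R(M)$). For $N,L\in\Lambda(M)$, $N_ML=\sum\{f(N)\mid f\in\mathrm{Hom}_R(M,L)\}$. $\sigma[M]$ is the full subcategory of left $R$-modules isomorphic to submodules of $M$-generated modules. A quasi-quantale is a complete lattice with an associative product $(a,b)\mapsto ab$ such that $(\bigvee X)a=\bigvee\{xa\mid x\in X\}$ and $a(\bigvee X)=\bigvee\{ax\mid x\in X\}$ for every directed (non-empty, upward-directed) subset $X$ and every element $a$. *)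

(* Defs.v *)
(* Left modules over an (associative, unital, not
   necessarily commutative) ring R are [lmodType R] with R : pzRingType. *)
From HB Require Import structures.
From mathcomp Require Import all_boot all_order all_algebra.
Set Implicit Arguments.
Unset Strict Implicit.
Unset Printing Implicit Defensive.
Import GRing.Theory.
Local Open Scope ring_scope.

Section ModuleDefs.
Variable R : pzRingType.

Definition hom (M N : lmodType R) (f : M -> N) : Prop :=
  forall (a : R) (x y : M), f (a *: x + y) = a *: f x + f y.

Definition subset_of (M : lmodType R) (A B : M -> Prop) : Prop :=
  forall x, A x -> B x.
Definition seteq (M : lmodType R) (A B : M -> Prop) : Prop :=
  forall x, A x <-> B x.

Definition submod (M : lmodType R) (N : M -> Prop) : Prop :=
  N 0 /\ forall (a : R) (x y : M), N x -> N y -> N (a *: x + y).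

Definition sumF (M : lmodType R) (I : Type) (N : I -> M -> Prop) : M -> Prop :=
  fun x => forall S : M -> Prop, submod S ->
    (forall i, subset_of (N i) S) -> S x.

(* N_M L = sum { f(N) | f in Hom_R(M, L) } *)
Definition prodM (M : lmodType R) (N L : M -> Prop) : M -> Prop :=
  fun x => forall S : M -> Prop, submod S ->
    (forall f : M -> M, hom f -> (forall m, L (f m)) ->
        forall n, N n -> S (f n)) -> S x.

Definition fully_invariant (M : lmodType R) (N : M -> Prop) : Prop :=
  submod N /\ forall f : M -> M, hom f -> forall x, N x -> N (f x).

Definition generated_by (M G : lmodType R) : Prop :=
  forall g : G, forall S : G -> Prop, submod S ->
    (forall f : M -> G, hom f -> forall m, S (f m)) -> S g.

(* N belongs to sigma[M]: N is isomorphic to a submodule of an M-generated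
   module, i.e. there is an injective homomorphism of N into an M-generated
   module. *)
Definition in_sigma (M N : lmodType R) : Prop :=
  exists (G : lmodType R) (i : N -> G),
    [/\ hom i, injective i & generated_by M G].

Definition projective_in_sigma (M : lmodType R) : Prop :=
  forall (A B : lmodType R), in_sigma M A -> in_sigma M B ->
  forall g : A -> B, hom g -> (forall b : B, exists a : A, g a = b) ->
  forall f : M -> B, hom f ->
  exists h : M -> A, hom h /\ forall m : M, g (h m) = f m.

Definition directed (M : lmodType R) (I : Type) (X : I -> M -> Prop) : Prop :=
  inhabited I /\ forall i j, exists k,
    subset_of (X i) (X k) /\ subset_of (X j) (X k).

Definition Lambda_quasi_quantale (M : lmodType R) : Prop :=
  [/\
      (forall (I : Type) (N : I -> M -> Prop),
         (forall i, submod (N i)) ->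
         [/\ submod (sumF N),
             (forall i, subset_of (N i) (sumF N)) &
             (forall S, submod S -> (forall i, subset_of (N i) S) ->
                subset_of (sumF N) S)]),
      (forall N L : M -> Prop, submod N -> submod L -> submod (prodM N L)),
      (forall N L K : M -> Prop, submod N -> submod L -> submod K ->
         seteq (prodM (prodM N L) K) (prodM N (prodM L K))),
      (forall (I : Type) (X : I -> M -> Prop) (a : M -> Prop),
         (forall i, submod (X i)) -> submod a -> directed X ->
         seteq (prodM (sumF X) a) (sumF (fun i => prodM (X i) a))) &
      (forall (I : Type) (X : I -> M -> Prop) (a : M -> Prop),
         (forall i, submod (X i)) -> submod a -> directed X ->
         seteq (prodM a (sumF X)) (sumF (fun i => prodM a (X i))))].

End ModuleDefs.

(* Main.v *)
From HB Require Import structures.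
From mathcomp Require Import all_boot all_order all_algebra.
From mathcomp Require Import boolp functions.
Require Import Defs.
Set Implicit Arguments.
Unset Strict Implicit.
Unset Printing Implicit Defensive.
Import GRing.Theory.
Local Open Scope ring_scope.

Record subm (R : pzRingType) (V : lmodType R) (P : V -> Prop) :=
  Subm { sv : V; sp : P sv }.

Section SubMod.
Variables (R : pzRingType) (V : lmodType R) (P : V -> Prop) (hP : submod P).

Definition Sm (_ : submod P) := subm P.

Lemma sv_inj : injective (@sv R V P).
Proof. by case=> x px [y py] /= exy; subst y; rewrite (Prop_irrelevance px py). Qed.

Lemma P0 : P 0. Proof. by case: hP. Qed.
Lemma PD x y : P x -> P y -> P (x + y).
Proof. by move=> px py; have := hP.2 1 x y px py; rewrite scale1r. Qed.
Lemma PZ a x : P x -> P (a *: x).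
Proof. by move=> px; have := hP.2 a x 0 px P0; rewrite addr0. Qed.
Lemma PN x : P x -> P (- x).
Proof. by move=> px; rewrite -scaleN1r; apply: PZ. Qed.

HB.instance Definition _ := gen_eqMixin (Sm hP).
HB.instance Definition _ := gen_choiceMixin (Sm hP).

Definition szero : Sm hP := Subm P0.
Definition sadd (x y : Sm hP) : Sm hP := Subm (PD (sp x) (sp y)).
Definition sopp (x : Sm hP) : Sm hP := Subm (PN (sp x)).
Definition sscale a (x : Sm hP) : Sm hP := Subm (PZ a (sp x)).

Lemma saddA : associative sadd.
Proof. by move=> x y z; apply: sv_inj; rewrite /= addrA. Qed.
Lemma saddC : commutative sadd.
Proof. by move=> x y; apply: sv_inj; rewrite /= addrC. Qed.
Lemma sadd0 : left_id szero sadd.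
Proof. by move=> x; apply: sv_inj; rewrite /= add0r. Qed.
Lemma saddN : left_inverse szero sopp sadd.
Proof. by move=> x; apply: sv_inj; rewrite /= addNr. Qed.

HB.instance Definition _ := GRing.isZmodule.Build (Sm hP) saddA saddC sadd0 saddN.

Lemma sscaleA a b (x : Sm hP) : sscale a (sscale b x) = sscale (a * b) x.
Proof. by apply: sv_inj; rewrite /= scalerA. Qed.
Lemma sscale1 : left_id 1 sscale.
Proof. by move=> x; apply: sv_inj; rewrite /= scale1r. Qed.
Lemma sscaleDr : right_distributive sscale +%R.
Proof. by move=> a x y; apply: sv_inj; rewrite /= scalerDr. Qed.
Lemma sscaleDl (v : Sm hP) : {morph sscale^~ v : a b / a + b}.
Proof. by move=> a b; apply: sv_inj; rewrite /= scalerDl. Qed.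

HB.instance Definition _ := GRing.Zmodule_isLmodule.Build R (Sm hP) sscaleA sscale1 sscaleDr sscaleDl.

Lemma sv_hom : hom (fun x : Sm hP => sv x).
Proof. by []. Qed.
End SubMod.

Definition eqT (J : Type) := J.
HB.instance Definition _ (J : Type) := gen_eqMixin (eqT J).
HB.instance Definition _ (J : Type) := gen_choiceMixin (eqT J).

Section Gen.
Variables (R : pzRingType).

Lemma hom0 (V W : lmodType R) (f : V -> W) : hom f -> f 0 = 0.
Proof.
move=> hf; have := hf 1 0 0; rewrite !scale1r addr0 -{1}[f 0]addr0.
by move=> e; apply: (GRing.addrI (f 0)); rewrite -e.
Qed.
Lemma homD (V W : lmodType R) (f : V -> W) : hom f -> forall x y, f (x + y) = f x + f y.
Proof. by move=> hf x y; have := hf 1 x y; rewrite !scale1r. Qed.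
Lemma homZ (V W : lmodType R) (f : V -> W) : hom f -> forall a x, f (a *: x) = a *: f x.
Proof. by move=> hf a x; have := hf a x 0; rewrite !addr0 hom0 // addr0. Qed.

Lemma Psum (V : lmodType R) (P : V -> Prop) (hP : submod P) (I : Type) (s : seq I) (F : I -> V) :
  (forall i, P (F i)) -> P (\sum_(i <- s) F i).
Proof.
move=> hF; elim: s => [|i s IH]; first by rewrite big_nil; apply: P0.
by rewrite big_cons; apply: PD.
Qed.

Lemma sumF_submod (V : lmodType R) (I : Type) (N : I -> V -> Prop) : submod (sumF N).
Proof.
split; first by move=> S [] ? _ _.
by move=> a x y hx hy S hS hN; apply: hS.2; [apply: hx | apply: hy].
Qed.

Lemma prodM_submod (V : lmodType R) (N L : V -> Prop) : submod (prodM N L).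
Proof.
split; first by move=> S [] ? _ _.
by move=> a x y hx hy S hS hN; apply: hS.2; [apply: hx | apply: hy].
Qed.

Lemma sumF_sub (V : lmodType R) (I : Type) (N : I -> V -> Prop) i :
  subset_of (N i) (sumF N).
Proof. by move=> x hx S _ hN; apply: hN hx. Qed.

Lemma prodM_in (V : lmodType R) (N L : V -> Prop) (f : V -> V) :
  hom f -> (forall m, L (f m)) -> forall n, N n -> prodM N L (f n).
Proof. by move=> hf hL n hn S _ H; apply: H. Qed.

Lemma preim_submod (V : lmodType R) (f : V -> V) (S : V -> Prop) :
  hom f -> submod S -> submod (fun y => S (f y)).
Proof.
move=> hf hS; split; first by rewrite hom0 //; case: hS.
by move=> a x y hx hy; rewrite hf; apply: hS.2.
Qed.

End Gen.

Section FinSupp.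
Variables (R : pzRingType) (M : lmodType R) (J : Type).

Definition FP (Z : J -> M -> Prop) (phi : J -> M) : Prop :=
  (exists s : seq (eqT J), forall j : eqT J, phi j <> 0 -> j \in s) /\ forall j, Z j (phi j).

Lemma FP_submod (Z : J -> M -> Prop) : (forall j, submod (Z j)) -> submod (FP Z).
Proof.
move=> hZ; split.
  by split; [exists [::] | move=> j; case: (hZ j)].
move=> a x y [[s1 hs1] hx] [[s2 hs2] hy]; split.
  exists (s1 ++ s2) => j; have -> : (a *: x + y) j = a *: x j + y j by [].
  move=> hj; rewrite mem_cat.
  case: (pselect (x j = 0)) => hxj; last by apply/orP; left; apply: hs1.
  case: (pselect (y j = 0)) => hyj; last by apply/orP; right; apply: hs2.
  by exfalso; apply: hj; rewrite hxj hyj scaler0 addr0.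
by move=> j; apply: (hZ j).2.
Qed.

Lemma big_cover (F : eqT J -> M) (s t : seq (eqT J)) :
  uniq s -> uniq t -> {subset s <= t} -> (forall j, F j <> 0 -> j \in s) ->
  \sum_(j <- t) F j = \sum_(j <- s) F j.
Proof.
move=> us ut st hs.
rewrite (bigID (mem s)) /= [X in _ + X]big1 ?addr0; last first.
  move=> j /negP hj; case: (pselect (F j = 0)) => // /hs; tauto.
rewrite -big_filter; apply: perm_big; apply: uniq_perm.
- exact: filter_uniq.
- exact: us.
by move=> j; rewrite mem_filter; case: (boolP (j \in s)) => //= /st ->.
Qed.

Lemma big_cover2 (F : eqT J -> M) (s t : seq (eqT J)) :
  uniq s -> uniq t -> (forall j, F j <> 0 -> j \in s) -> (forall j, F j <> 0 -> j \in t) ->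
  \sum_(j <- t) F j = \sum_(j <- s) F j.
Proof.
move=> us ut hs ht.
have uu : uniq (undup (s ++ t)) by exact: undup_uniq.
rewrite -(@big_cover F t (undup (s ++ t))) //; last first.
  by move=> j; rewrite mem_undup mem_cat => ->; rewrite orbT.
by apply: big_cover => // j; rewrite mem_undup mem_cat => ->.
Qed.

Variables (Y : J -> M -> Prop) (u : J -> M -> M) (hu : forall j, hom (u j)).

Definition cover (phi : J -> M) : seq (eqT J) :=
  undup (if pselect (exists s : seq (eqT J), forall j : eqT J, phi j <> 0 -> j \in s) is left e
         then projT1 (cid e) else [::]).

Definition sumS (phi : J -> M) : M := \sum_(j <- cover phi) u j (phi j).

Lemma sumS_eq (phi : J -> M) (t : seq (eqT J)) : uniq t ->
  (forall j : eqT J, phi j <> 0 -> j \in t) -> sumS phi = \sum_(j <- t) u j (phi j).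
Proof.
move=> ut ht; rewrite /sumS /cover.
case: pselect => [e|ne]; last by exfalso; apply: ne; exists t.
case: cid => s hs /=.
apply: big_cover2 => //; first exact: undup_uniq.
  move=> j hj; apply: ht => hz; apply: hj; rewrite hz; exact: hom0.
move=> j hj; rewrite mem_undup; apply: hs => hz; apply: hj; rewrite hz; exact: hom0.
Qed.

End FinSupp.

Section Key.
Variables (R : pzRingType) (M : lmodType R) (J : Type).
Variables (Y : J -> M -> Prop) (hY : forall j, submod (Y j)).
Variables (u : J -> M -> M) (hu : forall j, hom (u j)).

Lemma trueSub (j : J) : submod (fun _ : M => True).
Proof. by []. Qed.

Definition hA := FP_submod hY.
Definition hG := FP_submod trueSub.
Definition Am := Sm hA.
Definition Gm := Sm hG.

Definition img : M -> Prop := sumF (fun j x => exists2 y, Y j y & x = u j y).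
Definition hB := sumF_submod (fun j x => exists2 y, Y j y & x = u j y).
Definition Bm := Sm hB.

Lemma cover_uniq (phi : J -> M) :
  (exists s : seq (eqT J), forall j : eqT J, phi j <> 0 -> j \in s) ->
  exists t : seq (eqT J), uniq t /\ forall j : eqT J, phi j <> 0 -> j \in t.
Proof.
by case=> s hs; exists (undup s); split; [exact: undup_uniq | move=> j /hs; rewrite mem_undup].
Qed.

Lemma sumS_lin (a : R) (x y : J -> M) :
  (exists s : seq (eqT J), forall j : eqT J, x j <> 0 -> j \in s) ->
  (exists s : seq (eqT J), forall j : eqT J, y j <> 0 -> j \in s) ->
  sumS u (a *: x + y) = a *: sumS u x + sumS u y.
Proof.
move=> [s1 hs1] [s2 hs2].
have ut : uniq (undup (s1 ++ s2)) by exact: undup_uniq.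
have c1 : forall j : eqT J, x j <> 0 -> j \in undup (s1 ++ s2).
  by move=> j /hs1 h; rewrite mem_undup mem_cat h.
have c2 : forall j : eqT J, y j <> 0 -> j \in undup (s1 ++ s2).
  by move=> j /hs2 h; rewrite mem_undup mem_cat h orbT.
rewrite (sumS_eq hu ut c1) (sumS_eq hu ut c2) (sumS_eq hu ut); last first.
  move=> j; have -> : (a *: x + y) j = a *: x j + y j by [].
  case: (pselect (x j = 0)) => hxj; last by move=> _; apply: c1.
  case: (pselect (y j = 0)) => hyj; last by move=> _; apply: c2.
  by rewrite hxj hyj scaler0 addr0.
rewrite scaler_sumr -big_split /=; apply: eq_bigr => j _.
by rewrite (hu j).
Qed.

Lemma sumS_img (a : Am) : img (sumS u (sv a)).
Proof.
have [t [ut ct]] := cover_uniq (sp a).1.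
rewrite (sumS_eq hu ut ct); apply: (Psum hB).
move=> j; rewrite /img.
apply: (@sumF_sub R M J (fun j x => exists2 y, Y j y & x = u j y) j (u j (sv a j))).
by exists (sv a j) => //; apply: (sp a).2.
Qed.

Definition sigma (a : Am) : Bm := @Subm R M img (sumS u (sv a)) (sumS_img a).

Lemma sigma_hom : hom sigma.
Proof.
move=> a x y; apply: sv_inj => /=.
exact: sumS_lin (sp x).1 (sp y).1.
Qed.

Definition delta (j : eqT J) (y : M) : J -> M :=
  fun k : J => if (k : eqT J) == j then y else 0.

Lemma delta_cover j y : exists s : seq (eqT J), forall k : eqT J, delta j y k <> 0 -> k \in s.
Proof.
by exists [:: j] => k; rewrite /delta inE; case: (k == j).
Qed.

Lemma delta_FP (Z : J -> M -> Prop) (hZ : forall j, submod (Z j)) j y :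
  Z j y -> FP Z (delta j y).
Proof.
move=> hy; split; first exact: delta_cover.
move=> k; rewrite /delta; case: eqP => [-> //|_]; by case: (hZ k).
Qed.

Lemma sumS_delta j y : sumS u (delta j y) = u j y.
Proof.
rewrite (@sumS_eq _ _ _ _ hu _ [:: j]) //; last first.
  by move=> k; rewrite /delta inE; case: (k == j).
by rewrite big_seq1 /delta eqxx.
Qed.

Lemma sigma_surj (b : Bm) : exists a : Am, sigma a = b.
Proof.
case: b => x px.
suff [a ha] : exists a : Am, sumS u (sv a) = x.
  by exists a; apply: sv_inj.
apply: (px (fun x => exists a : Am, sumS u (sv a) = x)).
- split.
    exists 0; rewrite (@sumS_eq _ _ _ _ hu _ [::]) ?big_nil //.
  move=> a x1 y1 [a1 <-] [a2 <-]; exists (a *: a1 + a2) => /=.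
  exact: sumS_lin (sp a1).1 (sp a2).1.
- move=> j z [y hy ->].
  exists (@Subm _ _ (FP Y) (delta j y) (delta_FP hY hy)).
  exact: sumS_delta.
Qed.

Lemma generated_Gm : generated_by M Gm.
Proof.
move=> g S hS H.
pose dG (j : eqT J) (m : M) : Gm :=
  @Subm _ _ (FP (fun (_ : J) (_ : M) => True)) (delta j m) (delta_FP trueSub I).
have dGh : forall j, hom (dG j).
  move=> j a x y; apply: sv_inj => /=; apply/funext => k.
  change (delta j (a *: x + y) k = a *: delta j x k + delta j y k).
  by rewrite /delta; case: (_ == _) => //; rewrite scaler0 addr0.
have [t [ut ct]] := cover_uniq (sp g).1.
suff e : g = \sum_(j <- t) dG j (sv g j).
  by rewrite e; apply: (Psum hS) => j; apply: H.
apply: sv_inj.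
rewrite (big_morph (@sv _ _ _ : Gm -> (J -> M)) (fun x y => erefl) erefl).
rewrite fct_sumE; apply/funext => k /=.
case: (boolP ((k : eqT J) \in t)) => hk.
  pose F := fun j : eqT J => delta j ((sv g : J -> M) j) k.
  pose k' : eqT J := k.
  have -> : \sum_(i <- t) delta i (sv g i) k = \sum_(i <- t) F i by [].
  rewrite (@big_cover R M J F [:: k'] t) //.
  - by rewrite big_seq1 /F /delta eqxx.
  - by move=> z; rewrite inE => /eqP ->.
  - move=> j; rewrite /F /delta inE; case: ifP => [/eqP e _|_ h]; first by rewrite -e; exact: eqxx.
    by case: h.
have hz : sv g k = 0.
  case: (pselect (sv g k = 0)) => // /ct hk'.
  by rewrite hk' in hk.
rewrite hz big1 //.
by move=> j _; rewrite /delta; case: ifP => // /eqP e; rewrite -e.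
Qed.

Lemma inA : in_sigma M Am.
Proof.
exists Gm.
exists (fun a : Am => @Subm _ _ (FP (fun (_ : J) (_ : M) => True)) (sv a)
                      (conj (sp a).1 (fun _ => I))).
split.
- by move=> a x y; apply: sv_inj.
- by move=> a1 a2 /(congr1 (@sv _ _ _)) /= /sv_inj.
- exact: generated_Gm.
Qed.

Lemma inB : in_sigma M Bm.
Proof.
exists M; exists (fun b : Bm => sv b); split.
- by [].
- exact: sv_inj.
- move=> g S hS H; exact: (H id).
Qed.

Lemma key : projective_in_sigma M -> forall (h : M -> M), hom h -> (forall m, img (h m)) ->
  forall (m : M) (S : M -> Prop), submod S ->
  (forall j g, hom g -> (forall x, Y j (g x)) -> S (u j (g m))) -> S (h m).
Proof.
move=> proj h hh hr m S hS H.
pose f (x : M) : Bm := @Subm R M img (h x) (hr x).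
have fh : hom f by move=> a x y; apply: sv_inj; rewrite /= hh.
have [hl [hlh hlE]] := proj Am Bm inA inB sigma sigma_hom sigma_surj f fh.
have e := congr1 (@sv _ _ _) (hlE m); rewrite /= in e; rewrite -e.
have [t [ut ct]] := cover_uniq (sp (hl m)).1.
rewrite (sumS_eq hu ut ct); apply: Psum => // j.
apply: (H j (fun x => sv (hl x) j)).
- by move=> a x y; rewrite hlh.
- by move=> x; apply: (sp (hl x)).2.
Qed.

End Key.

Section Main.
Variables (R : pzRingType) (M : lmodType R).

Lemma hom_comp (f g : M -> M) : hom f -> hom g -> hom (fun x => f (g x)).
Proof. by move=> hf hg a x y; rewrite hg hf. Qed.

Lemma dist (I : Type) (N : I -> M -> Prop) (L : M -> Prop) :
  seteq (prodM (sumF N) L) (sumF (fun i => prodM (N i) L)).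
Proof.
move=> x; split.
- move=> hx; apply: (hx _ (sumF_submod _)) => f hf hL n hn.
  apply: (hn (fun y => sumF (fun i => prodM (N i) L) (f y))).
    exact: preim_submod hf (sumF_submod _).
  move=> i y hy.
  apply: (@sumF_sub R M I (fun i => prodM (N i) L) i (f y)).
  exact: prodM_in.
- move=> hx; apply: (hx _ (prodM_submod _ _)) => i y hy.
  apply: (hy _ (prodM_submod _ _)) => f hf hL n hn.
  apply: prodM_in => //; exact: (@sumF_sub R M I N i n).
Qed.

Lemma rdist : projective_in_sigma M -> forall (I : Type) (X : I -> M -> Prop) (a : M -> Prop),
  (forall i, submod (X i)) -> seteq (prodM a (sumF X)) (sumF (fun i => prodM a (X i))).
Proof.
move=> proj I X a hX x; split.
- move=> hx; apply: (hx _ (sumF_submod _)) => f hf hr n hn.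
  have hu : forall j : I, hom (fun y : M => y) by [].
  apply: (@key R M I X hX (fun _ y => y) hu proj f hf _ n _ (sumF_submod _)).
    move=> m; apply: (hr m _ (hB X (fun _ y => y))) => i y hy.
    by apply: (@sumF_sub R M I (fun j x => exists2 y, X j y & x = y) i y); exists y.
  move=> j g hg hgX.
  apply: (@sumF_sub R M I (fun i => prodM a (X i)) j (g n)).
  exact: prodM_in.
- move=> hx; apply: (hx _ (prodM_submod _ _)) => i y hy.
  apply: (hy _ (prodM_submod _ _)) => f hf hL n hn.
  apply: prodM_in => // m; exact: (@sumF_sub R M I X i (f m)).
Qed.

Lemma assoc : projective_in_sigma M -> forall N L K : M -> Prop, submod L ->
  seteq (prodM (prodM N L) K) (prodM N (prodM L K)).
Proof.
move=> proj N L K hL x; split.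
- move=> hx; apply: (hx _ (prodM_submod _ _)) => f hf hK n' hn'.
  apply: (hn' (fun y => prodM N (prodM L K) (f y))).
    exact: preim_submod hf (prodM_submod _ _).
  move=> g hg hgL n hn.
  apply: (prodM_in (f := fun z => f (g z))) => //.
    exact: hom_comp.
  move=> m; exact: prodM_in hf hK _ (hgL m).
- move=> hx; apply: (hx _ (prodM_submod _ _)) => h hh hr n hn.
  pose J := {f : M -> M | hom f /\ forall m, K (f m)}.
  have hu : forall j : J, hom (sval j) by move=> j; exact: (proj2_sig j).1.
  apply: (@key R M J (fun _ => L) (fun _ => hL) (fun j => sval j) hu proj h hh _ n _ (prodM_submod _ _)).
    move=> m; apply: (hr m _ (hB (fun _ : J => L) (fun j => sval j))) => f hf hK l hl.
    apply: (@sumF_sub R M J (fun j x => exists2 y, L y & x = sval j y) (exist _ f (conj hf hK)) (f l)).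
    by exists l.
  move=> j g hg hgL.
  apply: (prodM_in (f := sval j)); first exact: hu.
    exact: (proj2_sig j).2.
  exact: prodM_in.
Qed.

End Main.
Local Close Scope ring_scope.

Theorem proposition4p3 (R : pzRingType) (M : lmodType R) :
  projective_in_sigma M ->
  (* (1) *)
  (Lambda_quasi_quantale M /\
   (forall (I : Type) (N : I -> M -> Prop) (L : M -> Prop),
      (forall i, submod (N i)) -> submod L ->
      seteq (prodM (sumF N) L) (sumF (fun i => prodM (N i) L)))) /\
  (* (2) *)
  [/\ (forall (I : Type) (N : I -> M -> Prop),
         (forall i, fully_invariant (N i)) -> fully_invariant (sumF N)),
      (forall N L : M -> Prop,
         fully_invariant N -> fully_invariant L ->
         fully_invariant (prodM N L)) &
      (forall N : M -> Prop, fully_invariant N ->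
         seteq (prodM N (fun _ : M => True)) N)].
Proof.
move=> proj; split; first split.
- split.
  + move=> I N hN; split.
    * exact: sumF_submod.
    * move=> i; exact: sumF_sub.
    * by move=> S hS hNS x hx; apply: hx.
  + by move=> N L _ _; exact: prodM_submod.
  + by move=> N L K _ hL _; exact: assoc.
  + by move=> I X a _ _ _; exact: dist.
  + by move=> I X a hX _ _; exact: rdist.
- by move=> I N L _ _; exact: dist.
split.
- move=> I N hN; split; first exact: sumF_submod.
  move=> f hf x hx.
  apply: (hx (fun y => sumF N (f y))); first exact: preim_submod hf (sumF_submod _).
  move=> i y hy; apply: (@sumF_sub R M I N i (f y)).
  exact: (hN i).2 f hf y hy.
- move=> N L hN hL; split; first exact: prodM_submod.
  move=> p hp x hx.
  apply: (hx (fun y => prodM N L (p y))); first exact: preim_submod hp (prodM_submod _ _).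
  move=> g hg hgL n hn.
  apply: (prodM_in (f := fun z => p (g z))) => //; first exact: hom_comp.
  by move=> m; apply: hL.2.
- move=> N hN x; split.
  + move=> hx; apply: (hx N hN.1) => f hf _ n hn; exact: hN.2 f hf n hn.
  + by move=> hx; apply: (prodM_in (f := fun z => z)).
Qed.
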